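(* Let $\star$ be a semistar operation on an integral domain $D$ and $T$ an overring of $D$. Then $T$ is $t$-linked to $(D,\star)$ if and only if $T^{\ell_{\star,T}}=T$.
   Context: Let $D$ be an integral domain with quotient field $K$. $\overline{\mathbf F}(D)$ denotes the set of all nonzero $D$-submodules of $K$ and $\mathbf f(D)$ the set of nonzero finitely generated $D$-submodules of $K$. A semistar operation on $D$ is a map $\star:\overline{\mathbf F}(D)\to\overline{\mathbf F}(D)$, $E\mapsto E^\star$, such that for all $0\ne x\in K$ and $E,F\in\overline{\mathbf F}(D)$: (1) $(xE)^\star=xE^\star$; (2) $E\subseteq F\Rightarrow E^\star\subseteq F^\star$; (3) $E\subseteq E^\star$ and $(E^\star)^\star=E^\star$. $\star_f$ is defined by $E^{\star_f}=\bigcup\{F^\star:F\in\mathbf f(D),F\subseteq E\}$. A nonzero ideal $I$ of $D$ is a quasi-$\star$-ideal if $I^\star\cap D=I$; a quasi-$\star$-prime is a prime quasi-$\star$-ideal. An overring of $D$ is a ring $T$ with $D\subseteq T\subseteq K$; semistar operations on $T$ are defined likewise. For an overring $T$, $v_T$ is $E\mapsto (T:_K(T:_KE))$ and $t_T:=(v_T)_f$. If $\star'$ is a semistar operation on $T$, $T$ is $(\star,\star')$-linked to $D$ if for every nonzero finitely generated ideal $F\subseteq D$ with $F^\star=D^\star$ one has $(FT)^{\star'}=T^{\star'}$; $T$ is $t$-linked to $(D,\star)$ if it is $(\star,t_T)$-linked to $D$. The semistar operation $\ell_{\star,T}$ on $T$ is defined by $E^{\ell_{\star,T}}=\bigcap\{ET_{D\setminus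 P}: P$ a quasi-$\star_f$-prime ideal of $D\}$ for $E\in\overline{\mathbf F}(T)$ (equal to $K$ if there are none). *)

(* Defs.v *)
From HB Require Import structures.
From mathcomp Require Import all_boot all_algebra.
From mathcomp Require Import boolp classical_sets.
Set Implicit Arguments. Unset Strict Implicit. Unset Printing Implicit Defensive.
Import GRing.Theory.
Local Open Scope ring_scope.
Local Open Scope classical_set_scope.

Section Defs.
Variable K : fieldType.

Definition subring (R : set K) : Prop :=
  R 0 /\ R 1 /\ (forall x y, R x -> R y -> R (x - y)) /\
  (forall x y, R x -> R y -> R (x * y)).

Definition quotient_field_of (D : set K) : Prop :=
  forall x : K, exists a b, D a /\ D b /\ b != 0 /\ x = a / b.

Definition domain_with_qf (D : set K) : Prop := subring D /\ quotient_field_of D.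

Definition submodule (R E : set K) : Prop :=
  E 0 /\ (forall x y, E x -> E y -> E (x + y)) /\
  (forall a x, R a -> E x -> E (a * x)).

Definition nonzero (E : set K) : Prop := exists x, E x /\ x != 0.

Definition Fbar (R E : set K) : Prop := submodule R E /\ nonzero E.

Definition span (R : set K) (s : seq K) : set K :=
  [set x | exists c : nat -> K, (forall i, R (c i)) /\
                                x = \sum_(i < size s) c i * s`_i].

Definition fg (R E : set K) : Prop := Fbar R E /\ exists s, E = span R s.

Definition scale_set (x : K) (E : set K) : set K := [set y | exists e, E e /\ y = x * e].

(* star is a semistar operation on R (only its values on \bar F(R) matter). *)
Definition semistar (R : set K) (star : set K -> set K) : Prop :=
  (forall E, Fbar R E -> Fbar R (star E)) /\
  (forall x E, x != 0 -> Fbar R E -> star (scale_set x E) = scale_set x (star E)) /\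
  (forall E F, Fbar R E -> Fbar R F -> E `<=` F -> star E `<=` star F) /\
  (forall E, Fbar R E -> E `<=` star E /\ star (star E) = star E).

Definition finite_type (R : set K) (star : set K -> set K) : set K -> set K :=
  fun E => [set x | exists F, fg R F /\ F `<=` E /\ star F x].

Definition colon (T E : set K) : set K := [set x | forall e, E e -> T (x * e)].

Definition v_op (T : set K) : set K -> set K := fun E => colon T (colon T E).
Definition t_op (T : set K) : set K -> set K := finite_type T (v_op T).

Definition ideal (D I : set K) : Prop := I `<=` D /\ submodule D I.

Definition quasi_ideal (D : set K) (star : set K -> set K) (I : set K) : Prop :=
  ideal D I /\ nonzero I /\ star I `&` D = I.

Definition prime_ideal (D P : set K) : Prop :=
  ideal D P /\ ~ P 1 /\ (forall a b, D a -> D b -> P (a * b) -> P a \/ P b).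

Definition quasi_prime (D : set K) (star : set K -> set K) (P : set K) : Prop :=
  prime_ideal D P /\ quasi_ideal D star P.

Definition overring (D T : set K) : Prop := subring T /\ D `<=` T.

Definition prod_mod (A E : set K) : set K :=
  [set x | exists (n : nat) (a e : nat -> K), (forall i, A (a i)) /\
           (forall i, E (e i)) /\ x = \sum_(i < n) a i * e i].

Definition linked (D : set K) (star : set K -> set K) (T : set K)
  (star' : set K -> set K) : Prop :=
  forall F, fg D F -> F `<=` D -> star F = star D ->
    star' (prod_mod T F) = star' T.

Definition t_linked (D : set K) (star : set K -> set K) (T : set K) : Prop :=
  linked D star T (t_op T).

Definition loc (T D P : set K) : set K :=
  [set x | exists t s, T t /\ D s /\ ~ P s /\ x = t / s].

(* ell_{star,T}: intersection over quasi-star_f-primes (= K if none) *)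
Definition ell (D : set K) (star : set K -> set K) (T : set K) : set K -> set K :=
  fun E => [set x | forall P, quasi_prime D (finite_type D star) P ->
                              prod_mod (loc T D P) E x].

End Defs.

(* Main.v *)
Require Import Defs.
From HB Require Import structures.
From mathcomp Require Import all_boot all_algebra.
From mathcomp Require Import boolp classical_sets.
From mathcomp Require Import ring.
Set Implicit Arguments. Unset Strict Implicit. Unset Printing Implicit Defensive.
Import GRing.Theory.
Local Open Scope ring_scope.
Local Open Scope classical_set_scope.

Section Span.
Variable K : fieldType.
Implicit Types (R E : set K) (s : seq K).

Lemma span_nil R : R 0 -> forall x, Defs.span R [::] x <-> x = 0.
Proof.
move=> R0 x; split.
  by case=> c [_ ->]; rewrite big_ord0.
by move=> ->; exists (fun _ => 0); split => //; rewrite big_ord0.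
Qed.

Lemma span_cons R a s x :
  Defs.span R (a :: s) x <-> exists r y, R r /\ Defs.span R s y /\ x = r * a + y.
Proof.
split.
  case=> c [Rc ->]; exists (c 0%N), (\sum_(i < size s) c i.+1 * s`_i).
  split => //; split; first by exists (fun i => c i.+1).
  by rewrite /= big_ord_recl /=.
case=> r [y [Rr [[c [Rc ->]] ->]]].
exists (fun i => if i is j.+1 then c j else r); split; first by case.
by rewrite /= big_ord_recl.
Qed.

Lemma subringD R : subring R -> forall x y, R x -> R y -> R (x + y).
Proof.
move=> [R0 [R1 [RB RM]]] x y Rx Ry; have := RB x (0 - y) Rx (RB _ _ R0 Ry).
by rewrite sub0r opprK.
Qed.

Lemma span_submod R s : subring R -> submodule R (Defs.span R s).
Proof.
move=> hR; have RD := subringD hR; move: hR => [R0 [R1 [RB RM]]].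
elim: s => [|a s [IH0 [IHD IHM]]].
  split; first by apply/(span_nil R0).
  split; first by move=> x y /(span_nil R0) -> /(span_nil R0) ->; apply/(span_nil R0); rewrite addr0.
  by move=> r x _ /(span_nil R0) ->; apply/(span_nil R0); rewrite mulr0.
split; first by apply/span_cons; exists 0, 0; do !split => //; rewrite mul0r addr0.
split.
  move=> x y /span_cons [r [u [Rr [Su ->]]]] /span_cons [r' [u' [Rr' [Su' ->]]]].
  apply/span_cons; exists (r + r'), (u + u'); do !split; [exact: RD|exact: IHD|].
  by rewrite mulrDl -!addrA; congr (_ + _); rewrite addrCA.
move=> b x Rb /span_cons [r [u [Rr [Su ->]]]].
apply/span_cons; exists (b * r), (b * u); do !split; [exact: RM|exact: IHM|].
by rewrite mulrDr mulrA.
Qed.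

Lemma span_mem R s x : subring R -> x \in s -> Defs.span R s x.
Proof.
move=> hR; have [R0 [R1 _]] := hR; elim: s => [//|a s IH]; rewrite inE => /orP[/eqP ->|xs].
  apply/span_cons; exists 1, 0; do !split => //; first by case: (span_submod s hR).
  by rewrite mul1r addr0.
apply/span_cons; exists 0, x; do !split => //; first exact: IH.
by rewrite mul0r add0r.
Qed.

Lemma span_sub R E s : subring R -> submodule R E -> (forall x, x \in s -> E x) ->
  Defs.span R s `<=` E.
Proof.
move=> [R0 _] [E0 [ED EM]]; elim: s => [|a s IH] Hs x.
  by move/(span_nil R0) ->.
case/span_cons => r [y [Rr [Sy ->]]]; apply: ED.
  by apply: EM => //; apply: Hs; rewrite inE eqxx.
by apply: IH => // z zs; apply: Hs; rewrite inE zs orbT.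
Qed.

End Span.

Section Basics.
Variable K : fieldType.
Implicit Types (R E : set K) (s : seq K).

Lemma subring_sum R (n : nat) (F : nat -> K) :
  subring R -> (forall i, R (F i)) -> R (\sum_(i < n) F i).
Proof.
move=> hR HF; have RD := subringD hR; have [R0 _] := hR.
by apply: (big_ind R) => // i _.
Qed.

Lemma subring_submod R : subring R -> submodule R R.
Proof.
move=> hR; have RD := subringD hR; have [R0 [R1 [RB RM]]] := hR.
by split => //; split.
Qed.

Lemma span_fg R s x : subring R -> x \in s -> x != 0 -> fg R (Defs.span R s).
Proof.
move=> hR xs x0; split; last by exists s.
split; first exact: span_submod.
by exists x; split => //; apply: span_mem.
Qed.

Lemma span_mono R R' s : R `<=` R' -> Defs.span R s `<=` Defs.span R' s.
Proof. by move=> RR' x [c [Rc ->]]; exists c; split => // i; apply: RR'. Qed.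

Lemma span_scale R s a :
  subring R -> scale_set a (Defs.span R s) = Defs.span R (map (fun y => a * y) s).
Proof.
move=> hR; have [R0 _] := hR; apply: funext => z; apply: propext.
elim: s z => [|b s IH] z /=.
  split; first by case=> e [/(span_nil R0) -> ->]; apply/(span_nil R0); rewrite mulr0.
  by move/(span_nil R0) ->; exists 0; split; [apply/(span_nil R0)|rewrite mulr0].
split.
  case=> e [/span_cons [r [y [Rr [Sy ->]]]] ->]; apply/span_cons.
  exists r, (a * y); split => //; split; first by apply/IH; exists y.
  by rewrite mulrDr mulrCA.
case/span_cons => r [y [Rr [/IH [e [Se ->]] ->]]].
exists (r * b + e); split; first by apply/span_cons; exists r, e.
by rewrite mulrDr mulrCA.
Qed.

End Basics.

Section Main.
Variables (K : fieldType) (D T : set K) (star : set K -> set K).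
Hypotheses (hD : domain_with_qf D) (hs : semistar D star) (hT : overring D T).

Let Dsr : subring D := hD.1.
Let Tsr : subring T := hT.1.
Let DT : D `<=` T := hT.2.

Lemma FbarD : Fbar D D.
Proof.
split; first exact: subring_submod.
by exists 1; split; [case: Dsr => _ []|exact: oner_neq0].
Qed.

Lemma st_Fbar E : Fbar D E -> Fbar D (star E). Proof. exact: hs.1. Qed.
Lemma st_ext E : Fbar D E -> E `<=` star E. Proof. by move=> h; case: (hs.2.2.2 E h). Qed.
Lemma st_idem E : Fbar D E -> star (star E) = star E. Proof. by move=> h; case: (hs.2.2.2 E h). Qed.
Lemma st_mono E F : Fbar D E -> Fbar D F -> E `<=` F -> star E `<=` star F.
Proof. exact: hs.2.2.1. Qed.
Lemma st_scale x E : x != 0 -> Fbar D E -> star (scale_set x E) = scale_set x (star E).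
Proof. exact: hs.2.1. Qed.

Lemma st_one G : Fbar D G -> G `<=` D -> star G 1 -> star G = star D.
Proof.
move=> hG GD G1; apply: funext => z; apply: propext; split => Hz.
  by apply: (st_mono hG FbarD GD).
have hsG := st_Fbar hG.
have DsG : D `<=` star G.
  move=> d Dd; have := hsG.1.2.2 d 1 Dd G1; by rewrite mulr1.
have := st_mono FbarD hsG DsG Hz; by rewrite st_idem.
Qed.

Lemma t_le_T E : E `<=` T -> t_op T E `<=` T.
Proof.
move=> ET x [F [_ [FE Hx]]]; have := Hx 1; rewrite mulr1; apply.
by move=> e Fe; rewrite mul1r; apply: ET; apply: FE.
Qed.

Lemma T_le_t E G : fg T G -> G `<=` E -> colon T G `<=` T -> T `<=` t_op T E.
Proof.
move=> hG GE cT x Tx; exists G; split => //; split => // y /cT Ty.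
by case: Tsr => _ [_ [_ TM]]; apply: TM.
Qed.

Lemma tT : t_op T T = T.
Proof.
have T1 : T 1 by case: Tsr => _ [].
have mem1 : (1 : K) \in [:: 1] by rewrite inE.
apply: funext => z; apply: propext; split; first by apply: t_le_T.
apply: (T_le_t (G := Defs.span T [:: 1])).
- exact: (span_fg Tsr mem1 (oner_neq0 K)).
- by apply: (span_sub Tsr (subring_submod Tsr)) => x; rewrite inE => /eqP ->.
- move=> y Hy; have := Hy 1 (span_mem Tsr mem1); by rewrite mulr1.
Qed.

Lemma prod_mod_T F : F `<=` T -> prod_mod T F `<=` T.
Proof.
move=> FT x [n [a [e [Ta [Fe ->]]]]].
have := (@subring_sum _ T n (fun i => a i * e i) Tsr); apply => i.
by case: Tsr => _ [_ [_ TM]]; apply: TM => //; apply: FT.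
Qed.

Lemma ideal0 I : ideal D I -> I 0.
Proof. by case=> _ []. Qed.

Lemma loc_T P : prime_ideal D P -> T `<=` loc T D P.
Proof.
move=> [_ [nP1 _]] t Tt; exists t, 1; do !split => //; first by case: Dsr => _ [].
by rewrite divr1.
Qed.

Lemma loc_sum P : prime_ideal D P -> forall x, prod_mod (loc T D P) T x -> loc T D P x.
Proof.
move=> hP; have [hPi [nP1 Pp]] := hP.
have P0 : P 0 := ideal0 hPi.
have T0 : T 0 by case: Tsr.
have l0 : loc T D P 0 by apply: loc_T.
have lD : forall x y, loc T D P x -> loc T D P y -> loc T D P (x + y).
  move=> x y [t [s [Tt [Ds [nPs ->]]]]] [t' [s' [Tt' [Ds' [nPs' ->]]]]].
  have s0 : s != 0 by apply/eqP => e0; apply: nPs; rewrite e0.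
  have s0' : s' != 0 by apply/eqP => e0; apply: nPs'; rewrite e0.
  exists (t * s' + t' * s), (s * s'); split.
    by apply: (subringD Tsr); case: Tsr => _ [_ [_ TM]]; apply: TM => //; apply: DT.
  split; first by case: Dsr => _ [_ [_ DM]]; apply: DM.
  split; first by case/Pp.
  by field; apply/andP.
have lM : forall x e, loc T D P x -> T e -> loc T D P (x * e).
  move=> x e [t [s [Tt [Ds [nPs ->]]]]] Te; exists (t * e), s; do !split => //.
    by case: Tsr => _ [_ [_ TM]]; apply: TM.
  by rewrite mulrAC.
move=> x [n [a [e [La [Te ->]]]]].
by apply: (big_ind (loc T D P)) => // i _; apply: lM.
Qed.

Lemma ell_ge : T `<=` ell D star T T.
Proof.
move=> y Ty P [hP _]; exists 1%N, (fun _ => y), (fun _ => 1); split.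
  by move=> _; apply: loc_T.
split; first by move=> _; case: Tsr => _ [].
by rewrite big_ord1 mulr1.
Qed.

Lemma quasi_avoid P F : quasi_prime D (finite_type D star) P -> fg D F -> F `<=` D ->
  star F = star D -> exists f, F f /\ ~ P f.
Proof.
move=> [[_ [nP1 _]] [_ [_ Pq]]] hF FD sFD; apply: contrapT => NE.
have FP : F `<=` P by move=> f Ff; apply: contrapT => nPf; apply: NE; exists f.
have D1 : D 1 by case: Dsr => _ [].
apply: nP1; rewrite -Pq; split => //.
exists F; split => //; split => //; rewrite sFD; exact: (st_ext FbarD).
Qed.

Lemma dir1 : ell D star T T = T -> t_linked D star T.
Proof.
move=> Hell F hF FD sFD; rewrite tT.
have [[Fsub Fnz] [s Fs]] := hF.
pose G := Defs.span T s.
have FG : F `<=` G by rewrite Fs; apply: span_mono.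
have hG : fg T G.
  split; last by exists s.
  split; first exact: span_submod.
  by case: Fnz => z [Fz z0]; exists z; split => //; apply: FG.
apply: funext => z; apply: propext; split.
  by apply: t_le_T; apply: prod_mod_T => x /FD; apply: DT.
apply: (T_le_t hG).
  move=> x [c [Tc ->]]; exists (size s), c, (fun i => s`_i); split => //; split => // i.
  case: (ltnP i (size s)) => hi.
    by rewrite Fs; apply: span_mem => //; apply: mem_nth.
  by rewrite nth_default //; case: Fsub.
move=> y Hy; rewrite -Hell => P hP.
have [f [Ff nPf]] := quasi_avoid hP hF FD sFD.
have [[hPi _] _] := hP.
have f0 : f != 0 by apply/eqP => f0; apply: nPf; rewrite f0; apply: ideal0.
exists 1%N, (fun _ => y), (fun _ => 1); split.
  move=> _; exists (y * f), f; do !split => //; first by apply: Hy; apply: FG.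
    by apply: FD.
  by rewrite mulfK.
split; first by move=> _; case: Tsr => _ [].
by rewrite big_ord1 mulr1.
Qed.


Section Zorn.
Variable J : set K.
Let S (I : set K) := ideal D I /\ J `<=` I /\
  (forall G, fg D G -> G `<=` I -> ~ star G 1).

Lemma zorn_qprime : S J -> nonzero J ->
  exists M, S M /\ forall Q, S Q -> M `<=` Q -> Q `<=` M.
Proof.
move=> SJ Jnz.
have ZB : forall F, F `<=` (fun X => S (X `|` J)) -> total_on F subset ->
    S ((\bigcup_(X in F) X) `|` J).
  move=> F FP Ftot.
  pose U := (\bigcup_(X in F) X) `|` J.
  have form : forall Z, (Z = J \/ exists X, F X /\ Z = X `|` J) -> S Z /\ Z `<=` U.
    move=> Z [->|[X [FX ->]]]; first by split => // y Jy; right.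
    split; first exact: FP.
    by move=> y [Xy|Jy]; [left; exists X|right].
  have fin : forall s : seq K, (forall x, x \in s -> U x) ->
      exists Z, (Z = J \/ exists X, F X /\ Z = X `|` J) /\ (forall x, x \in s -> Z x).
    elim => [|a s IH] Hs; first by exists J; split; [left|].
    case: (IH _) => [x xs|Z [fZ sZ]]; first by apply: Hs; rewrite inE xs orbT.
    have [SZ ZU] := form Z fZ.
    have : U a by apply: Hs; rewrite inE eqxx.
    case => [[X FX Xa]|Ja].
      case: fZ => [EZ|[X' [FX' EZ]]].
        exists (X `|` J); split; first by right; exists X.
        move=> x; rewrite inE => /orP[/eqP ->|xs]; first by left.
        by have := sZ x xs; rewrite EZ; right.
      case: (Ftot X X' FX FX') => XX'.
        exists Z; split; first by right; exists X'.
        move=> x; rewrite inE => /orP[/eqP ->|xs]; last exact: sZ.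
        by rewrite EZ; left; apply: XX'.
      exists (X `|` J); split; first by right; exists X.
      move=> x; rewrite inE => /orP[/eqP ->|xs]; first by left.
      by have := sZ x xs; rewrite EZ => -[/XX' ?|?]; [left|right].
    exists Z; split => // x; rewrite inE => /orP[/eqP ->|xs]; last exact: sZ.
    exact: SZ.2.1.
  have fin2 : forall s : seq K, (forall x, x \in s -> U x) ->
      exists Z, S Z /\ (forall x, x \in s -> Z x) /\ Z `<=` U.
    move=> s /fin [Z [fZ sZ]]; have [SZ ZU] := form Z fZ; by exists Z.
  have J0 : J 0 by case: SJ => [[_ []]].
  split; [split|split].
  - move=> y Uy; case: (fin2 [:: y]) => [x|Z [[[ZD _] _] [sZ _]]]; first by rewrite inE => /eqP ->.
    by apply: ZD; apply: sZ; rewrite inE.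
  - split; first by right.
    split.
      move=> x y Ux Uy.
      case: (fin2 [:: x; y]) => [z|Z [[[_ [_ [ZA _]]] _] [sZ ZU]]].
        by rewrite !inE => /orP[] /eqP ->.
      by apply: ZU; apply: ZA; apply: sZ; rewrite !inE eqxx ?orbT.
    move=> r x Dr Ux.
    case: (fin2 [:: x]) => [z|Z [[[_ [_ [_ ZM]]] _] [sZ ZU]]]; first by rewrite inE => /eqP ->.
    by apply: ZU; apply: ZM => //; apply: sZ; rewrite inE.
  - by move=> y Jy; right.
  - move=> G hG GU; have [_ [s Gs]] := hG.
    case: (fin2 s) => [x xs|Z [[[_ ZS] [_ ZG]] [sZ _]]].
      by apply: GU; rewrite Gs; apply: span_mem.
    apply: ZG => //; rewrite Gs; exact: span_sub.
have [A [PA Amax]] := Zorn_bigcup ZB.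
exists (A `|` J); split => // Q SQ MQ x Qx; apply: contrapT => nMx.
apply: (Amax Q); last first.
  suff -> : Q `|` J = Q by [].
  apply: funext => y; apply: propext; split; last by left.
  by case => // /(SQ.2.1).
split; first by move=> y Ay; apply: MQ; left.
by move=> QA; apply: nMx; left; apply: QA.
Qed.

Lemma qprime_exists : S J -> nonzero J ->
  exists P, quasi_prime D (finite_type D star) P /\ J `<=` P.
Proof.
move=> SJ Jnz; have [M [[hMi [JM noM]] Mmax]] := zorn_qprime SJ Jnz.
have [z [Jz z0]] := Jnz; have Mz := JM z Jz.
have [MD [M0 [MA MM]]] := hMi.
have D1 : D 1 by case: Dsr => _ [].
have subM : forall s : seq K, (forall x, x \in s -> M x) -> Defs.span D s `<=` M.
  by move=> s Hs; apply: span_sub => //; exact: hMi.2.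
have M1 : ~ M 1.
  move=> M1; have mem1 : (1 : K) \in [:: 1] by rewrite inE.
  apply: (noM (Defs.span D [:: 1])).
  - exact: span_fg Dsr mem1 (oner_neq0 K).
  - by apply: subM => x; rewrite inE => /eqP ->.
  - apply: (st_ext (span_fg Dsr mem1 (oner_neq0 K)).1); exact: span_mem.
have comb : forall s : seq K, (forall y, y \in s -> finite_type D star M y) ->
    exists u, Defs.span D u `<=` M /\ fg D (Defs.span D u) /\
      forall y, y \in s -> star (Defs.span D u) y.
  elim => [|a s IH] Hs.
    have memz : z \in [:: z] by rewrite inE.
    exists [:: z]; split; first by apply: subM => x; rewrite inE => /eqP ->.
    by split => //; exact: span_fg Dsr memz z0.
  case: (IH _) => [y ys|u [uM [fu su]]]; first by apply: Hs; rewrite inE ys orbT.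
  have [H [hH [HM sHa]]] : exists F, fg D F /\ F `<=` M /\ star F a.
    by apply: Hs; rewrite inE eqxx.
  have [[_ [w [Hw w0]]] [uy Huy]] := hH.
  have incl : forall s1 s2 : seq K, (forall x, x \in s1 -> x \in s2) ->
      Defs.span D s1 `<=` Defs.span D s2.
    move=> s1 s2 H12; apply: span_sub => //; first exact: span_submod.
    by move=> x /H12 xs; apply: span_mem.
  have sub1 : Defs.span D uy `<=` Defs.span D (uy ++ u).
    by apply: incl => x xs; rewrite mem_cat xs.
  have sub2 : Defs.span D u `<=` Defs.span D (uy ++ u).
    by apply: incl => x xs; rewrite mem_cat xs orbT.
  have fu' : fg D (Defs.span D (uy ++ u)).
    split; last by exists (uy ++ u).
    split; first exact: span_submod.
    by exists w; split => //; apply: sub1; rewrite -Huy.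
  exists (uy ++ u); split.
    apply: subM => x; rewrite mem_cat => /orP[] xs.
      by apply: HM; rewrite Huy; apply: span_mem.
    by apply: uM; apply: span_mem.
  split => // y; rewrite inE => /orP[/eqP ->|ys].
    apply: (st_mono hH.1 fu'.1); last exact: sHa.
    by rewrite Huy.
  exact: (st_mono fu.1 fu'.1 sub2 (su y ys)).
have Msf : M `<=` finite_type D star M `&` D.
  move=> m Mm; split; last exact: MD.
  have memz : z \in [:: z; m] by rewrite inE eqxx.
  have mems : m \in [:: z; m] by rewrite !inE eqxx orbT.
  exists (Defs.span D [:: z; m]); split; first exact: span_fg Dsr memz z0.
  split; first by apply: subM => x; rewrite !inE => /orP[] /eqP ->.
  apply: (st_ext (span_fg Dsr memz z0).1); exact: span_mem.
pose M' := finite_type D star M `&` D.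
have SM' : S M'.
  split; [split|split].
  - by move=> x [].
  - split; first by apply: Msf.
    split.
      move=> x y [sx Dx] [sy Dy]; split; last exact: subringD.
      case: (comb [:: x; y]) => [w|u [uM [fu su]]].
        by rewrite !inE => /orP[] /eqP ->.
      exists (Defs.span D u); split => //; split => //.
      have [[_ [sA _]] _] := st_Fbar fu.1.
      by apply: sA; apply: su; rewrite !inE eqxx ?orbT.
    move=> r x Dr [[H [hH [HM sHx]]] Dx]; split; last first.
      by case: Dsr => _ [_ [_ DM]]; apply: DM.
    exists H; split => //; split => //; have [[_ [_ sM]] _] := st_Fbar hH.1; exact: sM.
  - by move=> y /JM /Msf.
  - move=> G hG GM'; have [_ [s Gs]] := hG.
    case: (comb s) => [y ys|u [uM [fu su]]].
      by have := GM' y; rewrite Gs => /(_ (span_mem Dsr ys)) [].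
    have GsH : G `<=` star (Defs.span D u).
      rewrite Gs; apply: (span_sub Dsr (st_Fbar fu.1).1); exact: su.
    move=> sG1; apply: (noM _ fu uM).
    rewrite -(st_idem fu.1); exact: (st_mono hG.1 (st_Fbar fu.1) GsH sG1).
have M'M : M' `<=` M by apply: Mmax => // x Mx; apply: Msf.
have Mq : finite_type D star M `&` D = M.
  by apply: funext => x; apply: propext; split; [apply: M'M|apply: Msf].
exists M; split => //; split; last by split => //; split => //; exists z.
split => //; split => //.
move=> a b Da Db Mab.
case: (pselect (M a)) => [|nMa]; first by left.
case: (pselect (M b)) => [|nMb]; first by right.
exfalso.
pose Q := [set d | D d /\ M (d * a)].
have aM : forall d, M d -> M (d * a) by move=> d Md; rewrite mulrC; apply: MM.
have SQ_false : ~ S Q.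
  move=> SQ; apply: nMb; apply: (Mmax Q SQ) => [d Md|]; first by split; [apply: MD|apply: aM].
  by split => //; rewrite mulrC.
have [G [hG [GQ sG1]]] : exists G, fg D G /\ G `<=` Q /\ star G 1.
  apply: contrapT => NE; apply: SQ_false; split; [split|split].
  - by move=> d [].
  - split; first by split; [case: Dsr|rewrite mul0r].
    split.
      move=> x y [Dx Mx] [Dy My]; split; first exact: subringD.
      by rewrite mulrDl; apply: MA.
    move=> r x Dr [Dx Mx]; split; first by case: Dsr => _ [_ [_ DM]]; apply: DM.
    by rewrite -mulrA; apply: MM.
  - by move=> j /JM Mj; split; [apply: MD|apply: aM].
  - by move=> G hG GQ sG1; apply: NE; exists G.
have a0 : a != 0 by apply/eqP => a0; apply: nMa; rewrite a0.
have [[Gsub [g [Gg g0]]] [s Gs]] := hG.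
have hG' : fg D (scale_set a G).
  rewrite Gs span_scale //; split; last by eexists.
  split; first exact: span_submod.
  exists (a * g); split; last by rewrite mulf_neq0.
  by rewrite -span_scale // -Gs; exists g.
apply: nMa; rewrite -Mq; split => //.
exists (scale_set a G); split => //; split.
  by move=> y [e [Ge ->]]; rewrite mulrC; case: (GQ e Ge).
rewrite st_scale //; first by exists 1; rewrite mulr1.
exact: hG.1.
Qed.

End Zorn.

Lemma dir2 : t_linked D star T -> ell D star T T = T.
Proof.
move=> tl; apply: funext => x; apply: propext; split; last exact: ell_ge.
move=> ex.
have T0 : T 0 by case: Tsr.
have [_ [_ [_ TM]]] := Tsr.
have [_ [_ [_ DM]]] := Dsr.
pose J := [set d | D d /\ T (d * x)].
case: (pselect (exists G, fg D G /\ G `<=` J /\ star G 1)) => [[G [hG [GJ sG1]]]|nA].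
  have GD : G `<=` D by move=> g /GJ [].
  have := tl G hG GD (st_one hG.1 GD sG1); rewrite tT => e.
  have : t_op T (prod_mod T G) 1 by rewrite e; case: Tsr => _ [].
  case=> H [_ [HP vH]]; have := vH x; rewrite mul1r; apply.
  move=> y /HP [n [a [g [Ta [Gg ->]]]]]; rewrite mulr_sumr.
  apply: (@subring_sum _ T n (fun i => x * (a i * g i)) Tsr) => i.
  rewrite mulrCA; apply: TM => //; rewrite mulrC; by case: (GJ _ (Gg i)).
have SJ : ideal D J /\ J `<=` J /\ (forall G, fg D G -> G `<=` J -> ~ star G 1).
  split; last by split => // G hG GJ sG1; apply: nA; exists G.
  split; first by move=> d [].
  split; first by split; [case: Dsr|rewrite mul0r].
  split.
    move=> d d' [Dd Td] [Dd' Td']; split; first exact: subringD.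
    by rewrite mulrDl; apply: subringD.
  by move=> r d Dr [Dd Td]; split; [apply: DM|rewrite -mulrA; apply: TM => //; apply: DT].
have Jnz : nonzero J.
  have [a [b [Da [Db [b0 xe]]]]] := hD.2 x.
  exists b; split => //; split => //.
  by rewrite xe mulrC divfK //; apply: DT.
have [P [hP JP]] := qprime_exists SJ Jnz.
have [[hPi [nP1 _]] _] := hP.
have := loc_sum hP.1 (ex P hP).
case=> t [s [Tt [Ds [nPs xe]]]].
have s0 : s != 0 by apply/eqP => e0; apply: nPs; rewrite e0; apply: ideal0.
exfalso; apply: nPs; apply: JP; split => //.
by rewrite xe mulrC divfK.
Qed.

End Main.

Unset Implicit Arguments.
Theorem proposition3p16 (K : fieldType) (D T : set K) (star : set K -> set K) :
  domain_with_qf D -> semistar D star -> overring D T ->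
  (t_linked D star T <-> ell D star T T = T).
Proof.
move=> hD hs hT; split; [exact: dir2|exact: dir1].
Qed.
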